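(* Let $G$ be a graph with an edge $e=t_1t_2$. Then $G$ has a fundamental rooted cycle basis (a spanning tree $T$ such that every fundamental cycle of $T$ contains $e$) if and only if there exist two vertex sets $S_1,S_2$ such that: (i) $S_1$ and $S_2$ partition $V(G)$; (ii) $t_1$ and $t_2$ belong to different sets of the partition; (iii) for each $i\in\{1,2\}$, the subgraph induced by $S_i$ is connected; (iv) for each $i\in\{1,2\}$, the subgraph induced by $S_i$ is acyclic.
   Context: For a spanning tree $T$, the fundamental cycle of a non-tree edge $f$ is $f$ together with the unique path in $T$ connecting the endpoints of $f$; the fundamental cycle basis of $T$ consists of all fundamental cycles, and it is rooted at $e$ if all of them contain $e$. *)

(* Defs.v *)
(* Finite simple graphs: a symmetric irreflexive relation
   G on a finType V.  Subgraphs (edge sets) are symmetric subrelations. *)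
From mathcomp Require Import all_boot.
Set Implicit Arguments.
Unset Strict Implicit.
Unset Printing Implicit Defensive.

Definition is_cycle (V : finType) (E : rel V) (c : seq V) : bool :=
  ucycleb E c && (2 < size c).

Definition acyclic (V : finType) (E : rel V) : Prop :=
  forall c : seq V, ~~ is_cycle E c.

Definition induced (V : finType) (G : rel V) (S : {set V}) : rel V :=
  fun x y => [&& G x y, x \in S & y \in S].

Definition connected_on (V : finType) (E : rel V) (S : {set V}) : Prop :=
  forall x y, x \in S -> y \in S -> connect E x y.

Definition spanning_tree (V : finType) (G T : rel V) : Prop :=
  subrel T G /\ symmetric T /\ (forall x y, connect T x y) /\ acyclic T.

Definition edge_in_cycle (V : finType) (a b : V) (c : seq V) : bool :=
  ((a, b) \in zip c (rot 1 c)) || ((b, a) \in zip c (rot 1 c)).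

(* The fundamental cycle of a non-tree edge uv of G is  u :: p  where
   u :: p is the (unique) T-path from u to v (closed by the edge vu). *)
Definition fcb_rooted_at (V : finType) (G T : rel V) (t1 t2 : V) : Prop :=
  forall u v, G u v -> ~~ T u v ->
  forall p : seq V, path T u p -> uniq (u :: p) -> last u p = v ->
  edge_in_cycle t1 t2 (u :: p).

(* Main.v *)
Require Import Defs.
From mathcomp Require Import all_boot.

Lemma ctrans (V : finType) (e : rel V) x y z :
  connect e x y -> connect e y z -> connect e x z.
Proof. exact: connect_trans. Qed.
Arguments ctrans {V e x y z}.

Lemma zip_rot1 (V : eqType) (x : V) p :
  zip (x :: p) (rot 1 (x :: p)) = rcons (zip (x :: p) p) (last x p, x).
Proof.
rewrite rot1_cons; have gen : forall z y, zip (y :: p) (rcons p z) = rcons (zip (y :: p) p) (last y p, z).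
  by move=> z; elim: p => [|w q IH] y //=; rewrite IH.
exact: gen.
Qed.

Lemma mem_zip2 (V : eqType) (u v : V) s t : (u, v) \in zip s t -> v \in t.
Proof.
elim: s t => [|x s IH] [|y t] //=; rewrite in_cons => /orP[/eqP[_ ->]|/IH h];
  by rewrite ?in_cons ?eqxx ?h ?orbT.
Qed.

Lemma zip_path_rel (V : eqType) (e : rel V) x p u v :
  path e x p -> (u, v) \in zip (x :: p) p -> e u v.
Proof.
elim: p x => [|y p IH] x //= /andP[exy hp]; rewrite inE => /orP[/eqP[-> ->]//|].
exact: IH.
Qed.

Lemma ind_connect (V : finType) (G R : rel V) c x :
  subrel R G -> connect R c x ->
  connect (induced G [set y | connect R c y]) c x.
Proof.
move=> RG /connectP[p hp ->]; elim/last_ind: p hp => [|p y IH] //.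
rewrite rcons_path last_rcons => /andP[hp hl].
apply: (ctrans (IH hp)); apply: connect1.
rewrite /induced RG //= !inE; apply/andP; split.
  by apply/connectP; exists p.
by apply/connectP; exists (rcons p y); rewrite ?rcons_path ?hp ?hl ?last_rcons.
Qed.

Lemma connected_ind (V : finType) (G R : rel V) c :
  symmetric G -> subrel R G ->
  connected_on (induced G [set y | connect R c y]) [set y | connect R c y].
Proof.
move=> Gsym RG x y; rewrite !inE => hx hy.
have hs : connect_sym (induced G [set y | connect R c y]).
  apply: sym_connect_sym => u v; rewrite /induced Gsym.
  by case: (G v u); rewrite //= andbC.
apply: (ctrans (y := c)); last exact: ind_connect.
by rewrite hs; apply: ind_connect.
Qed.

Lemma acyc_ind (V : finType) (G T : rel V) (S : {set V}) :
  acyclic T -> (forall x y, x \in S -> y \in S -> G x y -> T x y) ->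
  acyclic (induced G S).
Proof.
move=> Tac H c; apply/negP => /andP[/andP[hc hu] hs].
apply: (negP (Tac c)); rewrite /is_cycle /ucycleb hs hu !andbT.
apply: sub_cycle hc => x y /and3P[? ? ?]; exact: H.
Qed.

Section Tree.
Variables (V : finType) (G T : rel V).
Hypotheses (Girr : irreflexive G) (TG : subrel T G) (Tsym : symmetric T)
  (Tac : acyclic T) (Tconn : forall x y, connect T x y).
Variables a b : V.
Hypothesis Tab : T a b.

Definition Tm := [rel x y | T x y && ~~((x==a)&&(y==b)) && ~~((x==b)&&(y==a))].

Lemma Tm_sym : symmetric Tm.
Proof.
move=> x y; rewrite /Tm /= Tsym; case: (T y x) => //=.
by rewrite [(y == a) && _]andbC [(y == b) && _]andbC andbC.
Qed.

Lemma Tm_sub : subrel Tm G.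
Proof. by move=> x y /andP[/andP[/TG]]. Qed.

Lemma ab_neq : a != b.
Proof. by apply/eqP => eab; have := Girr a; rewrite {2}eab TG. Qed.

Lemma not_ab : ~~ connect Tm a b.
Proof.
apply/negP => /connectP[p0 hp0 hl0].
case: (shortenP hp0) hl0 => p hp hu _ hl.
apply: (negP (Tac (a :: p))); rewrite /is_cycle /ucycleb hu andbT.
apply/andP; split.
  rewrite /= rcons_path -hl Tsym Tab andbT.
  by apply: (sub_path _ hp) => x y /andP[/andP[]].
case: p hp hu hl => [|y [|z q]] //=.
  by move=> _ _ eab; move: ab_neq; rewrite eab eqxx.
by move=> /andP[/andP[/andP[_ h] _] _] _ hb; rewrite hb !eqxx in h.
Qed.

Lemma s_step x y : T x y -> ~~((x==a)&&(y==b)) -> ~~((x==b)&&(y==a)) ->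
  connect Tm a x = connect Tm a y.
Proof.
move=> h1 h2 h3; have hxy : Tm x y by rewrite /= h1 h2 h3.
apply/idP/idP => h.
  by apply: (ctrans h); apply: connect1.
by apply: (ctrans h); apply: connect1; rewrite Tm_sym.
Qed.

Lemma cover v : connect Tm a v || connect Tm b v.
Proof.
have /connectP[p hp ->] : connect T a v by apply: Tconn.
elim/last_ind: p hp => [|p y IH]; first by rewrite connect0.
rewrite rcons_path last_rcons => /andP[hp hl].
have := IH hp; set w := last a p.
case hab: ((w == a) && (y == b)).
  by case/andP: hab => _ /eqP ->; rewrite connect0 orbT.
case hba: ((w == b) && (y == a)).
  by case/andP: hba => _ /eqP ->; rewrite connect0.
have hm : Tm w y by rewrite /= hl hab hba.
by case/orP => h; apply/orP; [left|right]; apply: (ctrans h); apply: connect1.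
Qed.

Lemma disj v : connect Tm a v -> connect Tm b v -> False.
Proof.
move=> ha hb; move: not_ab; rewrite (ctrans ha) //.
by rewrite (sym_connect_sym Tm_sym).
Qed.

Lemma no_ab_path y p : path T y p ->
  (a, b) \notin zip (y :: p) p -> (b, a) \notin zip (y :: p) p ->
  connect Tm a y = connect Tm a (last y p).
Proof.
elim: p y => [|z p IH] y //= /andP[hyz hp].
rewrite !inE !negb_or !xpair_eqE => /andP[h1 h2] /andP[h3 h4].
rewrite (@s_step y z hyz); first exact: IH.
  by rewrite (eq_sym y) (eq_sym z).
by rewrite (eq_sym y) (eq_sym z).
Qed.

Lemma sa : connect Tm a a. Proof. exact: connect0. Qed.
Lemma sb : connect Tm a b = false. Proof. exact/negbTE/not_ab. Qed.

Lemma cross x p : path T x p -> uniq (x :: p) ->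
  ((a, b) \in zip (x :: p) p) || ((b, a) \in zip (x :: p) p) ->
  connect Tm a x != connect Tm a (last x p).
Proof.
elim: p x => [|y p IH] x //= /andP[hxy hp] /andP[hx hu].
rewrite !inE !xpair_eqE.
have hyp : y \notin p by case/andP: hu.
have hxp : x \notin p by move: hx; rewrite in_cons negb_or => /andP[].
case: (boolP ((x == a) && (y == b))) => [/andP[/eqP ex /eqP ey] _|n1].
  have nb : (a,b) \notin zip (y::p) p.
    by apply/negP => /mem_zip2; rewrite -ey; apply/negP.
  have na : (b,a) \notin zip (y::p) p.
    by apply/negP => /mem_zip2; rewrite -ex; apply/negP.
  by rewrite -(@no_ab_path y p hp nb na) ex ey sa sb.
case: (boolP ((x == b) && (y == a))) => [/andP[/eqP ex /eqP ey] _|n2].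
  have nb : (a,b) \notin zip (y::p) p.
    by apply/negP => /mem_zip2; rewrite -ex; apply/negP.
  have na : (b,a) \notin zip (y::p) p.
    by apply/negP => /mem_zip2; rewrite -ey; apply/negP.
  by rewrite -(@no_ab_path y p hp nb na) ex ey sa sb.
move=> h; rewrite (@s_step x y hxy n1 n2); apply: IH => //.
move: h; rewrite !(eq_sym a) !(eq_sym b) (negbTE n1) (negbTE n2) /=. by [].
Qed.

Lemma no_edge x p : path T x p -> uniq (x :: p) ->
  connect Tm a x = connect Tm a (last x p) -> ~~ edge_in_cycle a b (x :: p).
Proof.
move=> hp hu hs; rewrite /edge_in_cycle zip_rot1 !mem_rcons !inE !xpair_eqE.
apply/negP => h.
have hz : ((a, b) \in zip (x :: p) p) || ((b, a) \in zip (x :: p) p).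
  case/orP: h => [/orP[/andP[/eqP e1 /eqP e2]|->//]|/orP[/andP[/eqP e1 /eqP e2]|->]];
    last by rewrite orbT.
  - by rewrite -e1 -e2 sa sb in hs.
  - by rewrite -e1 -e2 sa sb in hs.
by move: (@cross x p hp hu hz); rewrite hs eqxx.
Qed.

End Tree.

Lemma mem_zip1 (V : eqType) (u v : V) s t : (u, v) \in zip s t -> u \in s.
Proof.
elim: s t => [|x s IH] [|y t] //=; rewrite in_cons => /orP[/eqP[-> _]|/IH h];
  by rewrite ?in_cons ?eqxx ?h ?orbT.
Qed.

Lemma notin_zip (V : eqType) (a b x : V) p : a \notin x :: p ->
  (a, b) \notin zip (x :: p) p /\ (b, a) \notin zip (x :: p) p.
Proof.
move=> h; split; apply/negP.
  by move/mem_zip1 => h'; rewrite h' in h.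
move/mem_zip2 => h'; move: h; rewrite in_cons h' orbT //.
Qed.

Lemma path_avoid (V : eqType) (e e' : rel V) a b x p :
  (forall u v, e u v -> ~~((u==a)&&(v==b)) -> ~~((u==b)&&(v==a)) -> e' u v) ->
  path e x p -> (a,b) \notin zip (x::p) p -> (b,a) \notin zip (x::p) p ->
  path e' x p.
Proof.
move=> H; elim: p x => [|y p IH] x //= /andP[hxy hp].
rewrite !in_cons !negb_or !xpair_eqE => /andP[h1 h2] /andP[h3 h4].
rewrite IH // andbT; apply: H => //.
  by rewrite (eq_sym x) (eq_sym y).
by rewrite (eq_sym x) (eq_sym y).
Qed.

Lemma path_side (V : eqType) (e : rel V) (s : pred V) x p :
  (forall u v, e u v -> s u = s v) -> path e x p -> s x = s (last x p).
Proof.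
move=> H; elim: p x => [|y p IH] x //= /andP[hxy hp].
by rewrite (H _ _ hxy) IH.
Qed.

Lemma path_induced (V : finType) (G e : rel V) (S : {set V}) x q :
  (forall u v, e u v -> u \in S -> induced G S u v) ->
  path e x q -> x \in S -> path (induced G S) x q.
Proof.
move=> H; elim: q x => [|y q IH] x //= /andP[hxy hq] hx.
have hi := H _ _ hxy hx; rewrite hi /=; apply: IH => //.
by case/and3P: hi.
Qed.

Lemma csub (V : finType) (e e' : rel V) x y :
  subrel e e' -> connect e x y -> connect e' x y.
Proof.
move=> H /connectP[p hp ->]; apply/connectP; exists p => //.
exact: sub_path hp.
Qed.

Lemma back (V : finType) (G : rel V) (Gsym : symmetric G) (a b : V)
  (S1 S2 : {set V}) :
  S1 :|: S2 = setT -> S1 :&: S2 = set0 -> a \in S1 -> b \in S2 -> G a b ->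
  connected_on (induced G S1) S1 -> connected_on (induced G S2) S2 ->
  acyclic (induced G S1) -> acyclic (induced G S2) ->
  exists T : rel V, spanning_tree G T /\ fcb_rooted_at G T a b.
Proof.
move=> hU hI ha hb Gab hc1 hc2 hac1 hac2.
have hin v : (v \in S1) || (v \in S2).
  by have := in_setT v; rewrite -hU inE.
have hdis v : v \in S1 -> v \in S2 -> False.
  move=> h1 h2; have : v \in S1 :&: S2 by rewrite inE h1 h2.
  by rewrite hI inE.
have hab : a != b by apply/eqP => e; apply: (hdis a) => //; rewrite e.
pose T2 : rel V := fun x y => induced G S1 x y || induced G S2 x y.
pose T : rel V := fun x y => (T2 x y || ((x == a) && (y == b))) || ((x == b) && (y == a)).
have indsym S : symmetric (induced G S).
  by move=> x y; rewrite /induced Gsym; case: (G y x); rewrite //= andbC.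
have T2sym : symmetric T2 by move=> x y; rewrite /T2 /= !(indsym _ x).
have Tsym : symmetric T.
  move=> x y; rewrite /T /= T2sym [(y == a) && _]andbC [(y == b) && _]andbC.
  by rewrite orbAC.
have sT2 u v : T2 u v -> (u \in S1) = (v \in S1).
  case/orP => /and3P[_ hu hv]; first by rewrite hu hv.
  by apply/idP/idP => h; [case: (hdis u) | case: (hdis v)].
have hT2 u v : T u v -> ~~((u==a)&&(v==b)) -> ~~((u==b)&&(v==a)) -> T2 u v.
  by rewrite /T /= => /orP[/orP[|->]|->].
have hind1 u v : T2 u v -> u \in S1 -> induced G S1 u v.
  case/orP => // /and3P[_ hu _] h; case: (hdis u h hu).
have hind2 u v : T2 u v -> u \in S2 -> induced G S2 u v.
  case/orP => // /and3P[_ hu _] h; case: (hdis u hu h).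
have T2ac : acyclic T2.
  move=> [|x p] //; apply/negP => /andP[/andP[hc hu] hs].
  case/orP: (hin x) => hx.
    apply: (negP (hac1 (x :: p))); rewrite /is_cycle /ucycleb hs hu !andbT.
    exact: (@path_induced _ G T2 S1 x (rcons p x) hind1 hc hx).
  apply: (negP (hac2 (x :: p))); rewrite /is_cycle /ucycleb hs hu !andbT.
  exact: (@path_induced _ G T2 S2 x (rcons p x) hind2 hc hx).
have avoidT2 x p : path T x p -> a \notin x :: p -> path T2 x p.
  move=> hp hn; have [n1 n2] := @notin_zip _ a b x p hn.
  exact: (@path_avoid _ T T2 a b x p hT2 hp n1 n2).
exists T; split; first split.
- move=> x y; rewrite /T /= => /orP[/orP[/orP[]/and3P[]//|]|];
    by case/andP => /eqP -> /eqP ->; rewrite // Gsym.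
split=> //; split.
  have ca v : connect T v a.
    case/orP: (hin v) => hv.
      apply: (@csub _ (induced G S1) T v a _ (hc1 v a hv ha)) => x y h; by rewrite /T /= /T2 /= h.
    apply: (ctrans (@csub _ (induced G S2) T v b _ (hc2 v b hv hb))); last first.
      by apply: connect1; rewrite /T /= !eqxx orbT.
    by move=> x y h; rewrite /T /= /T2 /= h orbT.
  move=> x y; apply: (ctrans (ca x)); by rewrite (sym_connect_sym Tsym).
move=> c; apply/negP => /andP[/andP[hc hu] hs].
have key p : cycle T (a :: p) -> uniq (a :: p) -> 2 < size (a :: p) -> False.
  case: p => [|y [|z q]] // hcy huq _.
  have : path T a (rcons [:: y, z & q] a) := hcy.
  rewrite rcons_path => /andP[hpa Tla]; move: hpa => /andP[Tay hp].
  move: huq => /= /andP[]; rewrite !in_cons !negb_or => /and3P[nay naz naq].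
  move=> /and3P[/andP[nyz nyq] nzq huq].
  have hp2 : path T2 y (z :: q).
    apply: avoidT2 => //; by rewrite !in_cons !negb_or nay naz naq.
  set l := last y (z :: q) in Tla hp hp2.
  have sl := @path_side _ T2 (fun w => w \in S1) y (z :: q) sT2 hp2; rewrite -/l in sl.
  have lq : l \in z :: q by rewrite /l /= mem_last.
  have nla : l != a by apply/eqP => e; move: lq; rewrite e in_cons (negbTE naz) (negbTE naq).
  have nly : l != y by apply/eqP => e; move: lq; rewrite e in_cons (negbTE nyz) (negbTE nyq).
  have sa : (a \in S1) = true by [].
  have sb : (b \in S1) = false by apply/negP => h; apply: (hdis b).
  case hy2 : (T2 a y); case hl2 : (T2 l a).
  - apply: (negP (T2ac [:: a, y, z & q])).
    have hcyc : path T2 a (rcons [:: y, z & q] a).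
      by rewrite rcons_path -/l hl2 andbT; apply/andP; split.
    rewrite /is_cycle /ucycleb; apply/andP; split => //; apply/andP; split.
      exact: hcyc.
    by rewrite /= !in_cons !negb_or nay naz naq nyz nyq nzq huq.
  - move: Tla; rewrite /T /= hl2 /= (negbTE nla) /= eqxx andbT => /eqP e; have {}e : l = b := e.
    by move: (sT2 _ _ hy2); rewrite sl e sa sb.
  - move: Tay; rewrite /T /= hy2 eqxx /=.
    case/orP => [/eqP e|/andP[/eqP eab _]]; last by move: hab; rewrite eab eqxx.
    by move: (sT2 _ _ hl2); rewrite -sl e sa sb.
  - move: Tla; rewrite /T /= hl2 /= (negbTE nla) /= eqxx andbT => /eqP e.
    have {}e : l = b := e.
    move: Tay; rewrite /T /= hy2 eqxx /=.
    case/orP => [/eqP e'|/andP[/eqP eab _]]; last by move: hab; rewrite eab eqxx.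
    by move: nly; rewrite e e' eqxx.
case: c hc hu hs => [|x p] // hc hu hs.
case: (boolP (a \in x :: p)) => hax.
  case: (rot_to hax) => i s' e.
  by apply: (key s'); rewrite -e ?rot_cycle ?rot_uniq ?size_rot.
apply: (negP (T2ac (x :: p))); rewrite /is_cycle /ucycleb hu hs !andbT.
apply: avoidT2 hc _; rewrite in_cons mem_rcons -in_cons; move: hax.
by rewrite !in_cons; case: (a == x).
move=> u v Guv nT p hp hup hl.
rewrite /edge_in_cycle zip_rot1 !mem_rcons !in_cons.
case: (boolP ((a, b) \in zip (u :: p) p)) => [h|n1].
  by apply/orP; left; apply/orP; right.
case: (boolP ((b, a) \in zip (u :: p) p)) => [h|n2].
  by apply/orP; right; apply/orP; right.
exfalso; have hp2 := @path_avoid _ T T2 a b u p hT2 hp n1 n2.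
have := @path_side _ T2 (fun w => w \in S1) u p sT2 hp2; rewrite hl => e.
move: nT; rewrite /T /= /T2 /= /induced Guv /=.
case/orP: (hin u) => hu.
  by rewrite hu -e hu.
have nu : u \in S1 = false by apply/negP => h; apply: (hdis u).
have hv : v \in S2 by case/orP: (hin v) => // h; move: e; rewrite nu h.
by rewrite hu hv !orbT.
Qed.

Theorem mainTheorem15 (V : finType) (G : rel V)
    (Gsym : symmetric G) (Girr : irreflexive G) (t1 t2 : V) (He : G t1 t2) :
  (exists T : rel V, spanning_tree G T /\ fcb_rooted_at G T t1 t2) <->
  (exists S1 S2 : {set V},
     [/\ S1 :|: S2 = setT /\ S1 :&: S2 = set0,
         (t1 \in S1 /\ t2 \in S2) \/ (t1 \in S2 /\ t2 \in S1),
         connected_on (induced G S1) S1 /\ connected_on (induced G S2) S2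
       & acyclic (induced G S1) /\ acyclic (induced G S2)]).
Proof.
split; last first.
  case=> S1 [S2 [[hU hI] [[h1 h2]|[h1 h2]] [c1 c2] [a1 a2]]].
    exact: (@back _ _ Gsym t1 t2 S1 S2 hU hI h1 h2 He c1 c2 a1 a2).
  by apply: (@back _ _ Gsym t1 t2 S2 S1 _ _ h1 h2 He c2 c1 a2 a1); rewrite 1?setUC 1?setIC.
case=> T [[TG [Tsym [Tconn Tac]]] hroot].
have gen : forall a b, T a b ->
  (forall x y, connect (Tm V T a b) a x -> connect (Tm V T a b) a y ->
     G x y -> T x y) ->
  (forall x y, connect (Tm V T a b) b x -> connect (Tm V T a b) b y ->
     G x y -> T x y) ->
  (connect (Tm V T a b) a t1 /\ connect (Tm V T a b) b t2) ->
  exists S1 S2 : {set V},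
     [/\ S1 :|: S2 = setT /\ S1 :&: S2 = set0,
         (t1 \in S1 /\ t2 \in S2) \/ (t1 \in S2 /\ t2 \in S1),
         connected_on (induced G S1) S1 /\ connected_on (induced G S2) S2
       & acyclic (induced G S1) /\ acyclic (induced G S2)].
  move=> a b Tab H1 H2 [ht1 ht2].
  exists [set v | connect (Tm V T a b) a v], [set v | connect (Tm V T a b) b v].
  split.
  - split; apply/setP => v; rewrite !inE; first exact: (cover _ _ Tconn a b v).
    by apply/negbTE/negP => /andP[h1 h2]; apply: (disj _ _ _ Girr TG Tsym Tac _ _ Tab _ h1 h2).
  - by left; rewrite !inE.
  - by split; apply: connected_ind => //; apply: Tm_sub.
  - split; apply: (@acyc_ind _ G T _ Tac) => x y; rewrite !inE; [exact: H1|exact: H2].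
have upath : forall x y, exists p, [/\ path T x p, uniq (x :: p) & last x p = y].
  move=> x y; case/connectP: (Tconn x y) => p0 hp0 ->.
  by case: (shortenP hp0) => p hp hu _; exists p.
case: (boolP (T t1 t2)) => T12.
  apply: (gen t1 t2 T12); last by split; [exact: connect0 | exact: connect0].
  - move=> x y hx hy Gxy; apply/negPn/negP => nT.
    have [p [hp hu hl]] := upath x y.
    have := hroot x y Gxy nT p hp hu hl; apply/negP.
    by apply: (no_edge _ _ _ Girr TG Tsym Tac _ _ T12 _ _ hp hu); rewrite hl hx hy.
  - move=> x y hx hy Gxy; apply/negPn/negP => nT.
    have [p [hp hu hl]] := upath x y.
    have := hroot x y Gxy nT p hp hu hl; apply/negP.
    apply: (no_edge _ _ _ Girr TG Tsym Tac _ _ T12 _ _ hp hu); rewrite hl.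
    have nx : connect (Tm V T t1 t2) t1 x = false.
      by apply/negP => h; apply: (disj _ _ _ Girr TG Tsym Tac _ _ T12 _ h hx).
    have ny : connect (Tm V T t1 t2) t1 y = false.
      by apply/negP => h; apply: (disj _ _ _ Girr TG Tsym Tac _ _ T12 _ h hy).
    by rewrite nx ny.
have [p [hp hu hl]] := upath t1 t2.
case: p hp hu hl => [|h q] /=.
  by move=> _ _ e; move: (Girr t1); rewrite {2}e He.
move=> /andP[T1h hq] /andP[n1 huq] hl.
have onlye : forall x y, G x y -> ~~ T x y -> (x == t2) && (y == t1) || (x == t1) && (y == t2).
  move=> x y Gxy nT; have [p [hp hu hl']] := upath x y.
  have := hroot x y Gxy nT p hp hu hl'.
  rewrite /edge_in_cycle zip_rot1 !mem_rcons !in_cons !xpair_eqE hl'.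
  case/orP => /orP[/andP[/eqP e1 /eqP e2]|hz].
  - by rewrite -e1 -e2 !eqxx.
  - by move: T12; rewrite (zip_path_rel _ _ _ _ _ _ hp hz).
  - by rewrite -e1 -e2 !eqxx orbT.
  - by move: T12; rewrite Tsym (zip_path_rel _ _ _ _ _ _ hp hz).
have ht2 : connect (Tm V T t1 h) h t2.
  apply/connectP; exists q => //.
  have [na nb] := @notin_zip _ t1 h h q n1.
  apply: (@path_avoid _ T (Tm V T t1 h) t1 h h q _ hq na nb).
  by move=> u v huv n3 n4; rewrite /= huv n3 n4.
have key : forall x y, G x y -> ~~ T x y -> 
  ~~ (connect (Tm V T t1 h) t1 x && connect (Tm V T t1 h) t1 y) /\
  ~~ (connect (Tm V T t1 h) h x && connect (Tm V T t1 h) h y).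
  move=> x y Gxy nT; have := onlye x y Gxy nT.
  have d1 := disj _ _ _ Girr TG Tsym Tac _ _ T1h _ (connect0 _ t1).
  have d2 := fun h2 => disj _ _ _ Girr TG Tsym Tac _ _ T1h _ h2 ht2.
  case/orP => /andP[/eqP -> /eqP ->]; split; apply/negP => /andP[u1 u2].
  - exact: d2 u1.
  - exact: d1 u2.
  - exact: d2 u2.
  - exact: d1 u1.
apply: (gen t1 h T1h); last by split; [exact: connect0|].
- move=> x y hx hy Gxy; apply/negPn/negP => nT.
  by case: (key x y Gxy nT) => /negP; rewrite hx hy.
- move=> x y hx hy Gxy; apply/negPn/negP => nT.
  by case: (key x y Gxy nT) => _ /negP; rewrite hx hy.
Qed.
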